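(* Let $x,x'$ be i.i.d. random elements of $\mathcal X$ and let $f,f^*:\mathcal X\to\mathbb R^r$ be measurable with $\mathbb E\|f(x)\|_2^4<\infty$ and $\mathbb E\|f^*(x)\|_2^4<\infty$. Suppose $\mathbb E[f(x)f^*(x)^T]=\mathbb E[f^*(x)f(x)^T]$ and this matrix is positive semidefinite. Then $$\mathbb E\big[\big(f(x)^Tf(x')-f^*(x)^Tf^*(x')\big)^2\big]\ge(2\sqrt2-2)\,\sigma_{\min}\big(\mathbb E[f^*(x)f^*(x)^T]\big)\,\mathbb E\big[\|f^*(x)-f(x)\|_2^2\big].$$
   Context: $\sigma_{\min}(M)$ denotes the smallest singular value of a matrix $M$. *)

(* Defs.v *)
From HB Require Import structures.
From mathcomp Require Import all_boot all_order all_algebra.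
From mathcomp Require Import all_classical all_reals all_analysis.
Set Implicit Arguments. Unset Strict Implicit. Unset Printing Implicit Defensive.
Import Order.TTheory GRing.Theory Num.Theory.
Local Open Scope ring_scope.
Local Open Scope classical_set_scope.

(* Vectors of R^r are row vectors 'rV[R]_r. *)

Definition sqnorm (R : realType) (r : nat) (v : 'rV[R]_r) : R :=
  \sum_(i < r) v 0 i ^+ 2.

Definition dotv (R : realType) (r : nat) (u v : 'rV[R]_r) : R :=
  \sum_(i < r) u 0 i * v 0 i.

Definition sigma_min (R : realType) (r : nat) (M : 'M[R]_r) : R :=
  Num.sqrt (inf [set a : R | eigenvalue (M^T *m M) a]).

Definition Emat d (X : measurableType d) (R : realType) (P : probability X R)
  (r : nat) (f g : X -> 'rV[R]_r) : 'M[R]_r :=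
  \matrix_(i, j) Rintegral P setT (fun x => f x 0 i * g x 0 j).

Definition measurable_vec d (X : measurableType d) (R : realType) (r : nat)
  (f : X -> 'rV[R]_r) : Prop :=
  forall i : 'I_r, measurable_fun setT (fun x => f x 0 i).

Definition psd (R : realType) (r : nat) (M : 'M[R]_r) : Prop :=
  forall v : 'rV[R]_r, 0 <= (v *m M *m v^T) 0 0.

(* Main.v *)
Require Import Defs.
From HB Require Import structures.
From mathcomp Require Import all_boot all_order all_algebra.
From mathcomp Require Import all_classical all_reals all_analysis.
From mathcomp Require Import lra ring.
From mathcomp Require measurable_realfun.
Import Order.TTheory GRing.Theory Num.Theory.
Local Open Scope ring_scope.
Local Open Scope classical_set_scope.

Module Helpers.
Import numFieldTopology.Exports numFieldNormedType.Exports.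
Import measurable_realfun.

Section Mat.
Context {R : realType} {r : nat}.
Implicit Types (M : 'M[R]_r) (v w : 'rV[R]_r).

Definition qf M v : R := (v *m M *m v^T) 0 0.
Definition bf M v w : R := (v *m M *m w^T) 0 0.

Lemma qfE M v : qf M v = \sum_i \sum_j v 0 i * M i j * v 0 j.
Proof.
rewrite /qf mxE [RHS]exchange_big /=; apply: eq_bigr => j _.
rewrite !mxE mulr_suml; apply: eq_bigr => i _; by rewrite ?mxE.
Qed.

Lemma sqnormE v : sqnorm v = (v *m v^T) 0 0.
Proof. rewrite mxE /sqnorm; apply: eq_bigr => i _; by rewrite !mxE expr2. Qed.

Lemma bf_sym M v w : M^T = M -> bf M w v = bf M v w.
Proof.
move=> sM; rewrite /bf -[in LHS](trmxK (w *m M *m v^T)) mxE.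
by rewrite !trmx_mul trmxK sM mulmxA.
Qed.

Lemma addE00 (A B : 'M[R]_1) : (A + B) 0 0 = A 0 0 + B 0 0.
Proof. by rewrite mxE. Qed.

Lemma qfD M v w : M^T = M -> qf M (v + w) = qf M v + qf M w + 2 * bf M v w.
Proof.
move=> sM; rewrite /qf linearD /= !(mulmxDl, mulmxDr) !addE00.
have := @bf_sym M v w sM; rewrite /bf => ->.
by rewrite mulr2n mulrDl mul1r; lra.
Qed.

Lemma scaleE00 a (A : 'M[R]_1) : (a *: A) 0 0 = a * A 0 0.
Proof. by rewrite mxE. Qed.

Lemma subE00 (A B : 'M[R]_1) : (A - B) 0 0 = A 0 0 - B 0 0.
Proof. by rewrite !mxE. Qed.

Lemma qfZ M a v : qf M (a *: v) = a ^+ 2 * qf M v.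
Proof.
by rewrite /qf linearZ /= -scalemxAr -!scalemxAl !scaleE00 mulrA expr2.
Qed.

Lemma sqnormZ a v : sqnorm (a *: v) = a ^+ 2 * sqnorm v.
Proof. by rewrite !sqnormE linearZ /= -scalemxAr -!scalemxAl !scaleE00 mulrA expr2. Qed.

Lemma qfB M1 M2 v : qf (M1 - M2) v = qf M1 v - qf M2 v.
Proof. by rewrite /qf mulmxBr mulmxBl subE00. Qed.

Lemma qf_scalar a v : qf a%:M v = a * sqnorm v.
Proof. by rewrite /qf mul_mx_scalar -scalemxAl scaleE00 sqnormE. Qed.

Lemma sqnorm_ge0 v : 0 <= sqnorm v.
Proof. by apply: sumr_ge0 => i _; rewrite sqr_ge0. Qed.

Lemma sqnorm_eq0 v : sqnorm v = 0 -> v = 0.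
Proof.
move=> /eqP; rewrite /sqnorm psumr_eq0 => [/allP H|i _]; last by rewrite sqr_ge0.
apply/rowP => i; rewrite mxE; apply/eqP; rewrite -sqrf_eq0.
by apply: (implyP (H i (mem_index_enum _))).
Qed.

End Mat.

Section Mat2.
Context {R : realType} {r : nat}.
Implicit Types (M : 'M[R]_r) (v w : 'rV[R]_r).

Lemma coordc (i : 'I_r) : continuous (fun w : 'rV[R]_r => w 0 i).
Proof. exact: coord_continuous. Qed.

Lemma cont_qf M : continuous (qf M).
Proof.
have -> : qf M = fun w => \sum_i \sum_j w 0 i * M i j * w 0 j.
  by apply/funext => w; rewrite qfE.
apply: continuous_big => [|i _]; first exact: add_continuous.
apply: continuous_big => [|j _]; first exact: add_continuous.
move=> w; apply: (continuousM (s := fun x : 'rV[R]_r => x 0 i * M i j) (t := fun x : 'rV[R]_r => x 0 j)); last exact: coordc.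
apply: (continuousM (s := fun x : 'rV[R]_r => x 0 i) (t := fun=> M i j)); first exact: coordc.
exact: cst_continuous.
Qed.

Lemma cont_sqnorm : continuous (@sqnorm R r).
Proof.
have -> : @sqnorm R r = fun w => \sum_i w 0 i * w 0 i.
  by apply/funext => w; rewrite /sqnorm; apply: eq_bigr => i _; rewrite expr2.
apply: continuous_big => [|i _]; first exact: add_continuous.
by move=> w; apply: (continuousM (s := fun x : 'rV[R]_r => x 0 i) (t := fun x : 'rV[R]_r => x 0 i)); exact: coordc.
Qed.

Lemma sqnorm_coord w i : w 0 i ^+ 2 <= sqnorm w.
Proof.
rewrite /sqnorm (bigD1 i) //= lerDl; apply: sumr_ge0 => j _; exact: sqr_ge0.
Qed.

Lemma sphere_compact : compact [set w : 'rV[R]_r | sqnorm w = 1].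
Proof.
apply: (@subclosed_compact _ _ [set w : 'rV[R]_r | forall i, `[(-1:R), 1]%classic (w ord0 i)]).
- have -> : [set w : 'rV[R]_r | sqnorm w = 1] = (@sqnorm R r) @^-1` [set 1] by [].
  apply: preimage_closed; last exact: closed_eq.
  by move=> x _; exact: cont_sqnorm.
- by apply: (@rV_compact _ _ (fun=> `[(-1:R), 1]%classic)) => i; exact: segment_compact.
- move=> w /= w1 i; have := sqnorm_coord w i; rewrite w1 => h.
  by rewrite /= in_itv /=; apply/andP; split; nra.
Qed.

End Mat2.

Section Mat3.
Context {R : realType} {r : nat}.
Implicit Types (M : 'M[R]_r) (v w : 'rV[R]_r).

Lemma normalize w : sqnorm w != 0 ->
  sqnorm ((Num.sqrt (sqnorm w))^-1 *: w) = 1.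
Proof.
move=> w0; have s0 : 0 <= sqnorm w by exact: sqnorm_ge0.
rewrite sqnormZ exprVn sqr_sqrtr // mulVf //.
Qed.

Lemma sigma_min_psd (B : 'M[R]_r) : B^T = B -> (forall v, 0 <= qf B v) ->
  forall v, sigma_min B * sqnorm v <= qf B v.
Proof.
move=> sB pB v.
have [v0|vn0] := eqVneq (sqnorm v) 0; first by rewrite v0 mulr0.
pose S := [set w : 'rV[R]_r | sqnorm w = 1].
have Sne : S !=set0 by exists ((Num.sqrt (sqnorm v))^-1 *: v); exact: normalize.
have [c cS cmin] := EVT_min_rV Sne sphere_compact
  (continuous_subspaceT (cont_qf B)).
have c1 : sqnorm c = 1 by move: cS; rewrite inE.
set m := qf B c.
have m0 : 0 <= m by exact: pB.
have lb w : m * sqnorm w <= qf B w.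
  have [w0|wn0] := eqVneq (sqnorm w) 0; first by rewrite w0 mulr0.
  have := cmin ((Num.sqrt (sqnorm w))^-1 *: w).
  rewrite inE qfZ exprVn sqr_sqrtr ?sqnorm_ge0// => /(_ (normalize w wn0)).
  have sp : 0 < sqnorm w by rewrite lt_neqAle eq_sym wn0 sqnorm_ge0.
  by rewrite -/m mulrC ler_pdivlMr // mulrC.
pose M' := B - m%:M.
have psdM w : 0 <= qf M' w by rewrite qfB qf_scalar subr_ge0.
have sM : M'^T = M' by rewrite /M' linearB /= tr_scalar_mx sB.
have qc : qf M' c = 0 by rewrite qfB qf_scalar c1 mulr1 subrr.
set y := c *m M'.
have y0 : y = 0.
  apply: sqnorm_eq0; apply/eqP; rewrite eq_le sqnorm_ge0 andbT leNgt.
  apply/negP => Ypos.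
  set Y := sqnorm y in Ypos *; set Q := qf M' y.
  have Q0 : 0 <= Q by exact: psdM.
  have bfe t : bf M' c (t *: y) = t * Y.
    by rewrite /bf linearZ /= -scalemxAr scaleE00 -/y /Y sqnormE.
  pose t := - Y / (Q + Y).
  have K0 : 0 < Q + Y by lra.
  have := psdM (c + t *: y); rewrite qfD // qfZ qc bfe add0r.
  have -> : t ^+ 2 * Q + 2 * (t * Y) = (Y / (Q + Y)) ^+ 2 * (- Q - 2 * Y).
    by rewrite /t; field; rewrite gt_eqF.
  rewrite pmulr_rge0; first by lra.
  by rewrite exprn_gt0 // divr_gt0.
have eig : c *m (B^T *m B) = m ^+ 2 *: c.
  have : c *m B = m *: c.
    by apply/eqP; rewrite -subr_eq0 -mul_mx_scalar -mulmxBr -/M' -/y y0.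
  by move=> h; rewrite sB mulmxA h -scalemxAl h scalerA expr2.
have cn0 : c != 0 by apply/eqP => c0; move: c1; rewrite c0 /sqnorm big1 => [|i _]; rewrite ?mxE ?expr0n //=; lra.
have eigB : eigenvalue (B^T *m B) (m ^+ 2) by apply/eigenvalueP; exists c.
have lbE : has_lbound [set a : R | eigenvalue (B^T *m B) a].
  exists 0 => a /= /eigenvalueP [w hw wn0].
  have wpos : 0 < sqnorm w.
    rewrite lt_neqAle sqnorm_ge0 andbT eq_sym; apply/eqP => /sqnorm_eq0.
    by move/eqP: wn0.
  have : qf (B^T *m B) w = a * sqnorm w.
    by rewrite /qf hw -scalemxAl scaleE00 sqnormE.
  have -> : qf (B^T *m B) w = sqnorm (w *m B^T).
    by rewrite /qf sqnormE trmx_mul trmxK !mulmxA.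
  move=> e; have := sqnorm_ge0 (w *m B^T); rewrite e.
  by rewrite pmulr_lge0.
have infle : inf [set a : R | eigenvalue (B^T *m B) a] <= m ^+ 2.
  by apply: (ge_inf lbE).
have sle : sigma_min B <= m.
  rewrite /sigma_min; apply: le_trans (ler_wsqrtr infle) _.
  by rewrite sqrtr_sqr ger0_norm.
apply: le_trans (lb v); apply: ler_wpM2r => //; exact: sqnorm_ge0.
Qed.

End Mat3.

Set Implicit Arguments. Unset Strict Implicit. Unset Printing Implicit Defensive.

Section Int.
Context {d} {X : measurableType d} {R : realType} (mu : {measure set X -> \bar R}).

Definition Ig (phi : X -> R) := mu.-integrable setT (EFin \o phi).
Notation E phi := (Rintegral mu setT phi).

Lemma intE phi : Ig phi -> (\int[mu]_x (phi x)%:E)%E = (E phi)%:E.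
Proof. by move=> h; rewrite /Rintegral fineK // integrable_fin_num. Qed.

Lemma Ig_add phi psi : Ig phi -> Ig psi -> Ig (fun x => phi x + psi x).
Proof.
move=> h1 h2; apply: eq_integrable (integrableD _ h1 h2) => //.
Qed.

Lemma E_add phi psi : Ig phi -> Ig psi -> E (fun x => phi x + psi x) = E phi + E psi.
Proof. by move=> h1 h2; rewrite RintegralD. Qed.

Lemma Ig_sub phi psi : Ig phi -> Ig psi -> Ig (fun x => phi x - psi x).
Proof.
move=> h1 h2; apply: eq_integrable (integrableB _ h1 h2) => //.
Qed.

Lemma E_sub phi psi : Ig phi -> Ig psi -> E (fun x => phi x - psi x) = E phi - E psi.
Proof. by move=> h1 h2; rewrite RintegralB. Qed.

Lemma Ig_scale c phi : Ig phi -> Ig (fun x => c * phi x).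
Proof.
move=> h; apply: eq_integrable (integrableZl _ c h) => //.
Qed.

Lemma E_scale c phi : Ig phi -> E (fun x => c * phi x) = c * E phi.
Proof. by move=> h; rewrite RintegralZl. Qed.

Lemma Ig0 : Ig (fun=> 0).
Proof. exact: integrable0. Qed.

Lemma E0 : E (fun=> 0) = 0.
Proof. by rewrite /Rintegral integral0. Qed.

Lemma Ig_sum (T : Type) (s : seq T) (F : T -> X -> R) :
  (forall k, Ig (F k)) -> Ig (fun x => \sum_(k <- s) F k x).
Proof.
move=> h; elim: s => [|k s ih].
  by apply: eq_integrable Ig0 => // x _; rewrite /= big_nil.
have := Ig_add (h k) ih; rewrite /Ig => H; apply: eq_integrable H => // x _; by rewrite /= big_cons.
Qed.

Lemma E_sum (T : Type) (s : seq T) (F : T -> X -> R) :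
  (forall k, Ig (F k)) -> E (fun x => \sum_(k <- s) F k x) = \sum_(k <- s) E (F k).
Proof.
move=> h; elim: s => [|k s ih].
  rewrite big_nil; transitivity (E (fun=> 0 : R)); last exact: E0.
  by apply: eq_Rintegral => x _; rewrite big_nil.
rewrite big_cons -ih -E_add //; last exact: Ig_sum.
by apply: eq_Rintegral => x _; rewrite big_cons.
Qed.

Lemma E_ge0 phi : (forall x, 0 <= phi x) -> 0 <= E phi.
Proof. by move=> h; apply: Rintegral_ge0 => x _. Qed.

End Int.

Section Main.
Context {d} {X : measurableType d} {R : realType} (P : probability X R) (r : nat)
  (f fs : X -> 'rV[R]_r).
Hypotheses (mf : measurable_vec f) (mfs : measurable_vec fs).
Hypotheses (h4f : (\int[P]_x ((sqnorm (f x)) ^+ 2)%:E < +oo)%E)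
  (h4fs : (\int[P]_x ((sqnorm (fs x)) ^+ 2)%:E < +oo)%E).

Notation E := (Rintegral P setT).
Notation Ig := (Ig P).

Lemma meas_sqnorm (g : X -> 'rV[R]_r) : measurable_vec g ->
  measurable_fun setT (fun x => sqnorm (g x)).
Proof. by move=> mg; rewrite /sqnorm; apply: measurable_sum => i; apply: measurable_funX. Qed.

Lemma Ig_sqnorm (g : X -> 'rV[R]_r) : measurable_vec g ->
  (\int[P]_x ((sqnorm (g x)) ^+ 2)%:E < +oo)%E -> Ig (fun x => sqnorm (g x)).
Proof.
move=> mg h4.
have J2 : Ig (fun x => sqnorm (g x) ^+ 2).
  apply/integrableP; split.
    by apply/measurable_EFinP; apply: measurable_funX; exact: meas_sqnorm.
  apply: le_lt_trans h4; rewrite le_eqVlt; apply/orP; left; apply/eqP.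
  by apply: eq_integral => x _; rewrite /comp gee0_abs // lee_fin sqr_ge0.
have J1 : Ig (fun x => 1 + sqnorm (g x) ^+ 2).
  apply: Ig_add => //; exact: (finite_measure_integrable_cst P 1 measurableT).
apply: le_integrable J1 => //.
  by apply/measurable_EFinP; exact: meas_sqnorm.
move=> x _ /=; have := sqnorm_ge0 (g x) => s0.
rewrite lee_fin !ger0_norm //; first nra.
by rewrite addr_ge0 // sqr_ge0.
Qed.

Definition V x := sqnorm (f x) + sqnorm (fs x).

Lemma IgV : Ig V.
Proof. by apply: Ig_add; apply: Ig_sqnorm. Qed.

Lemma Ig_mul (a b : X -> R) : measurable_fun setT a -> measurable_fun setT b ->
  (forall x, a x ^+ 2 <= V x) -> (forall x, b x ^+ 2 <= V x) ->
  Ig (fun x => a x * b x).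
Proof.
move=> ma mb ha hb; apply: le_integrable IgV => //.
  by apply/measurable_EFinP; exact: measurable_funM.
move=> x _ /=; have V0 : 0 <= V x by rewrite addr_ge0 // sqnorm_ge0.
rewrite lee_fin (ger0_norm V0) ler_norml.
have := ha x; have := hb x => h1 h2; apply/andP; split; nra.
Qed.

Lemma bf_coord x i : f x 0 i ^+ 2 <= V x.
Proof. by rewrite /V; apply: le_trans (sqnorm_coord _ i) _; rewrite lerDl sqnorm_ge0. Qed.
Lemma bfs_coord x i : fs x 0 i ^+ 2 <= V x.
Proof. by rewrite /V; apply: le_trans (sqnorm_coord _ i) _; rewrite lerDr sqnorm_ge0. Qed.

Definition p1 i j x := f x 0 i * f x 0 j.
Definition p2 i j x := f x 0 i * fs x 0 j.
Definition p3 i j x := fs x 0 i * f x 0 j.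
Definition p4 i j x := fs x 0 i * fs x 0 j.

Lemma Ig_p1 i j : Ig (p1 i j). Proof. apply: Ig_mul => // x; [exact: bf_coord| exact: bf_coord]. Qed.
Lemma Ig_p2 i j : Ig (p2 i j). Proof. apply: Ig_mul => // x; [exact: bf_coord| exact: bfs_coord]. Qed.
Lemma Ig_p3 i j : Ig (p3 i j). Proof. apply: Ig_mul => // x; [exact: bfs_coord| exact: bf_coord]. Qed.
Lemma Ig_p4 i j : Ig (p4 i j). Proof. apply: Ig_mul => // x; [exact: bfs_coord| exact: bfs_coord]. Qed.


Lemma E_qf (M : 'M[R]_r) (u : X -> 'rV[R]_r) :
  (forall i j, Ig (fun x => u x 0 i * u x 0 j)) ->
  E (fun x => qf M (u x)) = \sum_i \sum_j M i j * E (fun x => u x 0 i * u x 0 j).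
Proof.
move=> hu.
have hij i j : Ig (fun x => u x 0 i * M i j * u x 0 j).
  apply: eq_integrable (Ig_scale (M i j) (hu i j)) => // x _.
  by rewrite /=; congr (_%:E); ring.
transitivity (E (fun x => \sum_i \sum_j u x 0 i * M i j * u x 0 j)).
  by apply: eq_Rintegral => x _; rewrite qfE.
rewrite (E_sum _ (F := fun i x => \sum_j u x 0 i * M i j * u x 0 j)); last first.
  by move=> i; apply: Ig_sum => j; exact: hij.
apply: eq_bigr => i _.
rewrite (E_sum _ (F := fun j x => u x 0 i * M i j * u x 0 j)) //.
apply: eq_bigr => j _.
rewrite -E_scale //; apply: eq_Rintegral => x _ /=; ring.
Qed.

Lemma gprod i j x : (fs x - f x) 0 i * (fs x - f x) 0 j =
  p4 i j x - p3 i j x - p2 i j x + p1 i j x.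
Proof. rewrite !mxE /p1 /p2 /p3 /p4; ring. Qed.

Lemma Ig_g i j : Ig (fun x => (fs x - f x) 0 i * (fs x - f x) 0 j).
Proof.
apply: eq_integrable (Ig_add (Ig_sub (Ig_sub (Ig_p4 i j) (Ig_p3 i j)) (Ig_p2 i j)) (Ig_p1 i j)) => // x _.
by rewrite /= gprod.
Qed.

Lemma E_g i j : E (fun x => (fs x - f x) 0 i * (fs x - f x) 0 j) =
  E (p4 i j) - E (p3 i j) - E (p2 i j) + E (p1 i j).
Proof.
have I43 := Ig_sub (Ig_p4 i j) (Ig_p3 i j).
have I432 := Ig_sub I43 (Ig_p2 i j).
transitivity (E (fun x => (p4 i j x - p3 i j x - p2 i j x) + p1 i j x)).
  by apply: eq_Rintegral => x _; rewrite gprod.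
by rewrite (E_add I432 (Ig_p1 i j)) (E_sub I43 (Ig_p2 i j)) (E_sub (Ig_p4 i j) (Ig_p3 i j)).
Qed.


Lemma term_Ig a b c e i j :
  Ig (fun y => a * p1 i j y - b * p2 i j y - c * p3 i j y + e * p4 i j y).
Proof.
have h1 := Ig_scale a (Ig_p1 i j); have h2 := Ig_scale b (Ig_p2 i j).
have h3 := Ig_scale c (Ig_p3 i j); have h4 := Ig_scale e (Ig_p4 i j).
exact: (Ig_add (Ig_sub (Ig_sub h1 h2) h3) h4).
Qed.

Lemma term_E a b c e i j :
  E (fun y => a * p1 i j y - b * p2 i j y - c * p3 i j y + e * p4 i j y) =
  a * E (p1 i j) - b * E (p2 i j) - c * E (p3 i j) + e * E (p4 i j).
Proof.
have h1 := Ig_scale a (Ig_p1 i j); have h2 := Ig_scale b (Ig_p2 i j).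
have h3 := Ig_scale c (Ig_p3 i j); have h4 := Ig_scale e (Ig_p4 i j).
rewrite (E_add (Ig_sub (Ig_sub h1 h2) h3) h4) (E_sub (Ig_sub h1 h2) h3) (E_sub h1 h2).
by rewrite !E_scale ?Ig_p1 ?Ig_p2 ?Ig_p3 ?Ig_p4.
Qed.

Lemma lin4_Ig (c1 c2 c3 c4 : 'I_r -> 'I_r -> R) :
  Ig (fun y => \sum_i \sum_j (c1 i j * p1 i j y - c2 i j * p2 i j y
                              - c3 i j * p3 i j y + c4 i j * p4 i j y)).
Proof. apply: Ig_sum => i; apply: Ig_sum => j; exact: term_Ig. Qed.

Lemma lin4_E (c1 c2 c3 c4 : 'I_r -> 'I_r -> R) :
  E (fun y => \sum_i \sum_j (c1 i j * p1 i j y - c2 i j * p2 i j y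
                              - c3 i j * p3 i j y + c4 i j * p4 i j y)) =
  \sum_i \sum_j (c1 i j * E (p1 i j) - c2 i j * E (p2 i j)
                - c3 i j * E (p3 i j) + c4 i j * E (p4 i j)).
Proof.
rewrite (E_sum _ (F := fun i y => \sum_j (c1 i j * p1 i j y - c2 i j * p2 i j y
                              - c3 i j * p3 i j y + c4 i j * p4 i j y))); last first.
  by move=> i; apply: Ig_sum => j; exact: term_Ig.
apply: eq_bigr => i _.
rewrite (E_sum _ (F := fun j y => (c1 i j * p1 i j y - c2 i j * p2 i j y
                              - c3 i j * p3 i j y + c4 i j * p4 i j y))); last first.
  by move=> j; exact: term_Ig.
by apply: eq_bigr => j _; rewrite term_E.
Qed.


Lemma expand_h (x y : X) : (dotv (f x) (f y) - dotv (fs x) (fs y)) ^+ 2 =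
  \sum_i \sum_j (p1 i j x * p1 i j y - p2 i j x * p2 i j y
                - p3 i j x * p3 i j y + p4 i j x * p4 i j y).
Proof.
rewrite /dotv -sumrB expr2 mulr_suml; apply: eq_bigr => i _.
rewrite mulr_sumr; apply: eq_bigr => j _; rewrite /p1 /p2 /p3 /p4; ring.
Qed.

Lemma prod_int :
  (\int[(P \x P)%E]_z ((dotv (f z.1) (f z.2) - dotv (fs z.1) (fs z.2)) ^+ 2)%:E)%E =
  (\sum_i \sum_j (E (p1 i j) * E (p1 i j) - E (p2 i j) * E (p2 i j)
                - E (p3 i j) * E (p3 i j) + E (p4 i j) * E (p4 i j)))%:E.
Proof.
have mh : measurable_fun setT (fun z : X * X =>
    ((dotv (f z.1) (f z.2) - dotv (fs z.1) (fs z.2)) ^+ 2)%:E).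
  apply/measurable_EFinP; apply: measurable_funX; apply: measurable_funB;
    apply: measurable_sum => i; apply: measurable_funM.
  - exact: (measurableT_comp (mf i) measurable_fst).
  - exact: (measurableT_comp (mf i) measurable_snd).
  - exact: (measurableT_comp (mfs i) measurable_fst).
  - exact: (measurableT_comp (mfs i) measurable_snd).
rewrite (fubini_tonelli1 _ mh); last by move=> z; rewrite lee_fin sqr_ge0.
transitivity (\int[P]_x (\sum_i \sum_j (E (p1 i j) * p1 i j x - E (p2 i j) * p2 i j x
                - E (p3 i j) * p3 i j x + E (p4 i j) * p4 i j x))%:E)%E.
  apply: eq_integral => x _; rewrite /fubini_F /=.
  under eq_integral => y _ do rewrite expand_h.
  rewrite (intE (lin4_Ig (fun i j => p1 i j x) (fun i j => p2 i j x)
     (fun i j => p3 i j x) (fun i j => p4 i j x))).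
  rewrite lin4_E; congr (_%:E); apply: eq_bigr => i _; apply: eq_bigr => j _.
  by rewrite [_ * E (p1 i j)]mulrC [_ * E (p2 i j)]mulrC [_ * E (p3 i j)]mulrC [_ * E (p4 i j)]mulrC.
rewrite (intE (lin4_Ig (fun i j => E (p1 i j)) (fun i j => E (p2 i j))
     (fun i j => E (p3 i j)) (fun i j => E (p4 i j)))).
by rewrite lin4_E.
Qed.


Lemma sqnorm_int :
  (\int[P]_x (sqnorm (fs x - f x))%:E)%E =
  (\sum_i E (fun x => (fs x - f x) 0 i * (fs x - f x) 0 i))%:E.
Proof.
have e x : sqnorm (fs x - f x) = \sum_i (fs x - f x) 0 i * (fs x - f x) 0 i.
  by rewrite /sqnorm; apply: eq_bigr => i _; rewrite expr2.
have hI : Ig (fun x => \sum_i (fs x - f x) 0 i * (fs x - f x) 0 i).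
  by apply: Ig_sum => i; exact: Ig_g.
under eq_integral => x _ do rewrite e.
rewrite (intE hI) (E_sum _ (F := fun i x => (fs x - f x) 0 i * (fs x - f x) 0 i)) //.
by move=> i; exact: Ig_g.
Qed.

Lemma entry_identity (a c b t : R) : t ^+ 2 = 1 - 2 * t ->
  a ^+ 2 - 2 * c ^+ 2 + b ^+ 2 =
  (a - c - t * (b - c)) ^+ 2 + 2 * (1 - t) * (c * (a - 2 * c + b))
    + 2 * t * (b * (a - 2 * c + b)).
Proof.
move=> ht; apply/eqP; rewrite -subr_eq0.
have -> : a ^+ 2 - 2 * c ^+ 2 + b ^+ 2 -
  ((a - c - t * (b - c)) ^+ 2 + 2 * (1 - t) * (c * (a - 2 * c + b))
    + 2 * t * (b * (a - 2 * c + b))) = (1 - 2 * t - t ^+ 2) * (b - c) ^+ 2 by ring.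
by rewrite ht subrr mul0r.
Qed.

End Main.

Section Fin.
Context {d} {X : measurableType d} {R : realType} (P : probability X R) (r : nat)
  (f fs : X -> 'rV[R]_r).
Hypotheses (mf : measurable_vec f) (mfs : measurable_vec fs).
Hypotheses (h4f : (\int[P]_x ((sqnorm (f x)) ^+ 2)%:E < +oo)%E)
  (h4fs : (\int[P]_x ((sqnorm (fs x)) ^+ 2)%:E < +oo)%E).
Hypotheses (hC : Emat P f fs = Emat P fs f) (hpsd : psd (Emat P f fs)).

Notation E := (Rintegral P setT).

Lemma final :
  (((2 * Num.sqrt 2 - 2) * sigma_min (Emat P fs fs))%:E
     * \int[P]_x (sqnorm (fs x - f x))%:E
   <= \int[(P \x P)%E]_z ((dotv (f z.1) (f z.2) - dotv (fs z.1) (fs z.2)) ^+ 2)%:E)%E.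
Proof.
rewrite (sqnorm_int mf mfs h4f h4fs) (prod_int mf mfs h4f h4fs) -EFinM lee_fin.
pose D i j := E (fun x => (fs x - f x) 0 i * (fs x - f x) 0 j).
have hC' i j : E (p3 f fs i j) = E (p2 f fs i j).
  move/(congr1 (fun M : 'M[R]_r => M i j)): hC; rewrite !mxE /p2 /p3 => ->.
  by [].
have hD i j : D i j = E (p1 f i j) - 2 * E (p2 f fs i j) + E (p4 fs i j).
  rewrite /D (E_g mf mfs h4f h4fs) hC'; ring.
have S1 : 0 <= \sum_i \sum_j E (p2 f fs i j) * D i j.
  have := E_qf (Emat P f fs) (u := fun x => fs x - f x) (Ig_g mf mfs h4f h4fs).
  move=> e.
  have -> : \sum_i \sum_j E (p2 f fs i j) * D i j =
    E (fun x => qf (Emat P f fs) (fs x - f x)).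
    by rewrite e; apply: eq_bigr => i _; apply: eq_bigr => j _; rewrite mxE.
  by apply: E_ge0 => x; exact: hpsd.
pose Bm := Emat P fs fs.
have sB : Bm^T = Bm.
  apply/matrixP => i j; rewrite !mxE; apply: eq_Rintegral => x _; exact: mulrC.
have psdB v : 0 <= qf Bm v.
  have -> : qf Bm v = E (fun x => qf (v^T *m v) (fs x)).
    rewrite (E_qf (v^T *m v) (u := fs) (Ig_p4 mf mfs h4f h4fs)) qfE.
    apply: eq_bigr => i _; apply: eq_bigr => j _.
    rewrite !mxE big_ord1 !mxE; ring.
  apply: E_ge0 => x.
  have -> : qf (v^T *m v) (fs x) = sqnorm (fs x *m v^T).
    by rewrite /qf sqnormE trmx_mul trmxK !mulmxA.
  exact: sqnorm_ge0.
set sig := sigma_min Bm.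
have hs := sigma_min_psd Bm sB psdB.
have S2 : 0 <= \sum_i \sum_j (Bm - sig%:M) i j * D i j.
  have := E_qf (Bm - sig%:M) (u := fun x => fs x - f x) (Ig_g mf mfs h4f h4fs).
  move=> <-; apply: E_ge0 => x.
  by rewrite qfB qf_scalar subr_ge0.
have S2' : sig * \sum_i D i i <= \sum_i \sum_j E (p4 fs i j) * D i j.
  rewrite -subr_ge0; apply: le_trans S2 _; rewrite le_eqVlt; apply/orP; left.
  apply/eqP; rewrite mulr_sumr -sumrB; apply: eq_bigr => i _.
  have -> : \sum_j (Bm - sig%:M) i j * D i j =
     \sum_j E (p4 fs i j) * D i j - \sum_j (sig *+ (i == j)) * D i j.
    by rewrite -sumrB; apply: eq_bigr => j _; rewrite !mxE; ring.
  congr (_ - _).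
  rewrite (bigD1 i) //= eqxx mulr1n big1 ?addr0 // => j /negbTE.
  by rewrite eq_sym => ->; rewrite mulr0n mul0r.
have -> : \sum_i E (fun x => (fs x - f x) 0 i * (fs x - f x) 0 i) = \sum_i D i i by [].
pose t := Num.sqrt (2:R) - 1.
have s2 : Num.sqrt (2:R) ^+ 2 = 2 by rewrite sqr_sqrtr // ler0n.
have sq0 : 0 <= Num.sqrt (2:R) := sqrtr_ge0 2.
have t2 : t ^+ 2 = 1 - 2 * t by rewrite /t; nra.
have t0 : 0 <= t by rewrite /t; nra.
have t1 : t <= 1 by rewrite /t; nra.
have entry i j : 2 * (1 - t) * (E (p2 f fs i j) * D i j) + 2 * t * (E (p4 fs i j) * D i j)
   <= E (p1 f i j) * E (p1 f i j) - E (p2 f fs i j) * E (p2 f fs i j)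
      - E (p3 f fs i j) * E (p3 f fs i j) + E (p4 fs i j) * E (p4 fs i j).
  rewrite hC' hD.
  have := entry_identity (E (p1 f i j)) (E (p2 f fs i j)) (E (p4 fs i j)) t2.
  have := sqr_ge0 (E (p1 f i j) - E (p2 f fs i j) - t * (E (p4 fs i j) - E (p2 f fs i j))).
  lra.
have key : 2 * (1 - t) * (\sum_i \sum_j E (p2 f fs i j) * D i j)
     + 2 * t * (\sum_i \sum_j E (p4 fs i j) * D i j)
   <= \sum_i \sum_j (E (p1 f i j) * E (p1 f i j) - E (p2 f fs i j) * E (p2 f fs i j)
      - E (p3 f fs i j) * E (p3 f fs i j) + E (p4 fs i j) * E (p4 fs i j)).
  have -> : 2 * (1 - t) * (\sum_i \sum_j E (p2 f fs i j) * D i j)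
     + 2 * t * (\sum_i \sum_j E (p4 fs i j) * D i j) =
     \sum_i \sum_j (2 * (1 - t) * (E (p2 f fs i j) * D i j) + 2 * t * (E (p4 fs i j) * D i j)).
    rewrite !mulr_sumr -big_split; apply: eq_bigr => i _.
    by rewrite big_split !mulr_sumr.
  apply: ler_sum => i _; apply: ler_sum => j _; exact: entry.
have -> : 2 * Num.sqrt 2 - 2 = 2 * t by rewrite /t; ring.
have h1 : 0 <= (1 - t) * (\sum_i \sum_j E (p2 f fs i j) * D i j).
  by apply: mulr_ge0 => //; rewrite subr_ge0.
have h2 : 0 <= t * (\sum_i \sum_j E (p4 fs i j) * D i j - sig * \sum_i D i i).
  by apply: mulr_ge0 => //; rewrite subr_ge0.
lra.
Qed.
End Fin.

Unset Implicit Arguments.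
End Helpers.

Theorem mainTheorem15 (d : measure_display) (X : measurableType d)
  (R : realType) (P : probability X R) (r : nat)
  (f fs : X -> 'rV[R]_r) :
  measurable_vec f -> measurable_vec fs ->
  (\int[P]_x ((sqnorm (f x)) ^+ 2)%:E < +oo)%E ->
  (\int[P]_x ((sqnorm (fs x)) ^+ 2)%:E < +oo)%E ->
  Emat P f fs = Emat P fs f ->
  psd (Emat P f fs) ->
  (((2 * Num.sqrt 2 - 2) * sigma_min (Emat P fs fs))%:E
     * \int[P]_x (sqnorm (fs x - f x))%:E
   <= \int[(P \x P)%E]_z ((dotv (f z.1) (f z.2) - dotv (fs z.1) (fs z.2)) ^+ 2)%:E)%E.
Proof.
move=> mf mfs h4f h4fs hC hpsd.
exact: (Helpers.final mf mfs h4f h4fs hC hpsd).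
Qed.
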